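(* Let $A$ be a meet-complemented lattice in which $\Box x$ and $\Diamond x$ exist for every $x\in A$. Then for any $a\in A$ the following are equivalent: (i) $\Diamond\Box a\le\Box a$; (ii) $\Box a\le\Box\Box a$; (iii) $\Box a\vee\neg\Box a=1$; (iv) $\Box\Box a=\Box a$.
   Context: A meet-complemented lattice is a lattice $(L,\le)$ (not necessarily distributive) such that for every $a\in L$ the element $\neg a=\max\{b\in L: a\wedge b\le c\ \text{for all } c\in L\}$ exists; it is bounded with bottom $0$ and top $1$. For $a\in L$, $\Box a=\max\{b\in L: a\vee\neg b=1\}$ and $\Diamond a=\min\{b\in L: \neg a\vee b=1\}$. *)

(* Defs.v *)
From mathcomp Require Import all_boot all_order.
Set Implicit Arguments. Unset Strict Implicit. Unset Printing Implicit Defensive.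
Import Order.LTheory.
Local Open Scope order_scope.

Definition is_greatest (d : Order.disp_t) (T : porderType d) (P : T -> Prop) (m : T) :=
  P m /\ forall b, P b -> b <= m.

Definition is_least (d : Order.disp_t) (T : porderType d) (P : T -> Prop) (m : T) :=
  P m /\ forall b, P b -> m <= b.

Definition is_meet_complement (d : Order.disp_t) (T : tbLatticeType d) (neg : T -> T) :=
  forall a : T, is_greatest (fun b => forall c : T, a `&` b <= c) (neg a).

Definition is_box (d : Order.disp_t) (T : tbLatticeType d) (neg box : T -> T) :=
  forall a : T, is_greatest (fun b => a `|` neg b = \top) (box a).

Definition is_dia (d : Order.disp_t) (T : tbLatticeType d) (neg dia : T -> T) :=
  forall a : T, is_least (fun b => neg a `|` b = \top) (dia a).

(* Main.v *)
Require Import Defs.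
From mathcomp Require Import all_boot all_order.
Local Open Scope order_scope.
Import Order.LTheory.

Section S.
Variables (d : Order.disp_t) (A : tbLatticeType d) (neg box dia : A -> A).
Hypothesis (Hneg : is_meet_complement neg) (Hbox : is_box neg box) (Hdia : is_dia neg dia).

Lemma F1 (x y : A) : x `&` y = \bot -> y <= neg x.
Proof. move=> H; apply: (Hneg x).2 => c; by rewrite H le0x. Qed.

Lemma F2 (x : A) : x `&` neg x = \bot.
Proof. apply/eqP; rewrite -lex0; exact: (Hneg x).1. Qed.

Lemma F3 (e : A) : neg e = \top -> e = \bot.
Proof. move=> H; by rewrite -(meetx1 e) -H F2. Qed.

Lemma F4 (x y : A) : x <= y -> neg y <= neg x.
Proof.
move=> H; apply: F1; apply/eqP; rewrite -lex0 -(F2 y) lexI leIr andbT.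
exact: le_trans (leIl _ _) H.
Qed.

Lemma F5 (x : A) : x <= neg (neg x).
Proof. apply: F1; by rewrite meetC F2. Qed.

Lemma F6 (x : A) : neg (neg (neg x)) = neg x.
Proof. apply: le_anti; rewrite F5 andbT; apply: F4; exact: F5. Qed.

Lemma Key (x b : A) : x `|` neg b = \top -> b <= neg (neg x).
Proof.
move=> H; apply: F1.
set e := neg x `&` b.
have he : neg e = \top.
  apply: le_anti; rewrite lex1 /= -H leUx; apply/andP; split.
  - apply: F1; apply/eqP; rewrite -lex0 -(F2 x) lexI leIr /=.
    by rewrite /e; exact: le_trans (leIl _ _) (leIl _ _).
  - apply: F4; exact: leIr.
exact: F3.
Qed.

Lemma Reg (x : A) : box x = neg (neg (box x)).
Proof.
apply: le_anti; rewrite F5 /=; apply: (Hbox x).2.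
rewrite F6; exact: (Hbox x).1.
Qed.

End S.

Theorem proposition17 (d : Order.disp_t) (A : tbLatticeType d)
  (neg box dia : A -> A)
  (Hneg : is_meet_complement neg) (Hbox : is_box neg box) (Hdia : is_dia neg dia)
  (a : A) :
  (dia (box a) <= box a <-> box a <= box (box a)) /\
  (box a <= box (box a) <-> box a `|` neg (box a) = \top) /\
  (box a `|` neg (box a) = \top <-> box (box a) = box a).
Proof.
set B := box a.
have BB : box B <= B.
  rewrite [X in _ <= X](@Reg _ _ _ _ Hneg Hbox); apply: (@Key _ _ _ Hneg); exact: (Hbox B).1.
have ii_iii : B <= box B <-> B `|` neg B = \top.
  split=> [H|H]; last exact: (Hbox B).2.
  apply: le_anti; rewrite lex1 /= -((Hbox B).1).
  by rewrite leUx leUl /= (le_trans (@F4 _ _ _ Hneg _ _ H)) // leUr.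
have i_iii : dia B <= B <-> B `|` neg B = \top.
  split=> [H|H]; last by apply: (Hdia B).2; rewrite joinC.
  apply: le_anti; rewrite lex1 /= -((Hdia B).1).
  by rewrite leUx leUr /= (le_trans H) // leUl.
split; [|split].
- split=> H; [apply/ii_iii; apply/i_iii | apply/i_iii; apply/ii_iii] => //.
- exact: ii_iii.
- split=> [H|H]; [apply: le_anti; rewrite BB; apply/ii_iii | apply/ii_iii; rewrite H] => //.
Qed.
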